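(* Let $F$ be an $m\times n$ matrix, $B$ an $m\times p$ matrix and $H$ an $l\times n$ matrix. Let $x\in\mathbb{R}^n$ satisfy $Fx=Bf$ for an unknown $f\in\mathbb{R}^p$, and let the observation be $y=Hx+\eta\in\mathbb{R}^l$, where $\eta$ is a realization of a zero-mean random $l$-vector with unknown correlation matrix $R_\eta=E\eta\eta'$. Suppose $$\mathscr G=\{f\in\mathbb{R}^p:(Q_1f,f)_p\le 1\},\qquad \mathscr G_2=\{R_\eta:\operatorname{tr}(Q_2R_\eta)\le 1\},$$ where $Q_1$ ($p\times p$) and $Q_2$ ($l\times l$) are symmetric positive definite matrices. Let $\mathscr F=\{F'z+H'u: z\in\mathbb{R}^m,u\in\mathbb{R}^l\}$. If $\ell\in\mathscr F$, then the minimax a priori estimate of $x\mapsto(\ell,x)_n$ is $\widehat{(\ell,x)}=(\hat u,y)_l$ (i.e. $\hat c=0$) with $\hat u=Q_2Hp$, where $p$ together with some $\hat z\in\mathbb{R}^m$ solves $$Fp=BQ_1^{-1}B'\hat z,\qquad F'\hat z=\ell-H'Q_2Hp,$$ and the minimax a priori error equals $$\sup_{x,R_\eta}E[(\ell,x)_n-\widehat{(\ell,x)}]^2=(\ell,p)_n.$$ If $\ell\notin\mathscr F$, then the minimax a priori error is infinite.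
   Context: $(\cdot,\cdot)_k$ is the Euclidean inner product on $\mathbb{R}^k$; $B'$ is the transpose. For $\ell\in\mathbb{R}^n$, estimates of $(\ell,x)_n$ are affine functions $y\mapsto(u,y)_l+c$, $u\in\mathbb{R}^l$, $c\in\mathbb{R}$, with worst-case error $\sigma(u,c)=\sup\{E[(\ell,x)_n-(u,y)_l-c]^2: Fx\in B(\mathscr G), R_\eta\in\mathscr G_2\}$, where $B(\mathscr G)=\{Bf:f\in\mathscr G\}$. The minimax a priori (mean-squared) estimate is $(\hat u,y)_l+\hat c$ with $\sigma(\hat u,\hat c)=\inf_{u,c}\sigma(u,c)$; this infimum $\hat\sigma$ is the minimax a priori error. *)

(* Defs.v *)
From HB Require Import structures.
From mathcomp Require Import all_boot all_order all_algebra.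
From mathcomp Require Import all_classical all_reals all_analysis.
Set Implicit Arguments. Unset Strict Implicit. Unset Printing Implicit Defensive.
Import Order.TTheory GRing.Theory Num.Theory.
Local Open Scope ring_scope.

Definition dotv {R : realType} {k : nat} (u v : 'cV[R]_k) : R :=
  \sum_(i < k) u i 0 * v i 0.

Definition spd {R : realType} {k : nat} (Q : 'M[R]_k) : Prop :=
  Q^T = Q /\ forall v : 'cV[R]_k, v != 0 -> 0 < dotv (Q *m v) v.

(* the random l-vector eta given componentwise, evaluated at an outcome w *)
Definition rvec {R : realType} {T : Type} {l : nat} (eta : 'I_l -> T -> R)
  (w : T) : 'cV[R]_l := \col_i eta i w.

Definition corr_mx {d} {T : measurableType d} {R : realType}
  (P : probability T R) {l : nat} (eta : 'I_l -> T -> R) : 'M[R]_l :=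
  \matrix_(i, j) fine ('E_P[eta i \* eta j])%E.

(* admissible noise: zero-mean random l-vector with finite second moments
   (so that its correlation matrix exists) and R_eta in G_2 *)
Definition admissible_noise {d} {T : measurableType d} {R : realType}
  (P : probability T R) {l : nat} (Q2 : 'M[R]_l) (eta : 'I_l -> T -> R) : Prop :=
  (forall i, eta i \in Lfun P 2%:E) /\
  (forall i, ('E_P[eta i] = 0)%E) /\
  \tr (Q2 *m corr_mx P eta) <= 1.

(* worst-case mean-squared error sigma(u,c) of the affine estimate
   y |-> (u,y)_l + c of (ell,x)_n, y = H x + eta, over all x with
   F x = B f, (Q1 f, f) <= 1, and all admissible noises (on any probability
   space). *)
Definition sigma_err {R : realType} {m n p l : nat}
  (F : 'M[R]_(m, n)) (B : 'M[R]_(m, p)) (H : 'M[R]_(l, n))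
  (Q1 : 'M[R]_p) (Q2 : 'M[R]_l) (ell : 'cV[R]_n)
  (u : 'cV[R]_l) (c : R) : \bar R :=
  ereal_sup [set v : \bar R |
    exists (x : 'cV[R]_n) (f : 'cV[R]_p),
      F *m x = B *m f /\ dotv (Q1 *m f) f <= 1 /\
      exists (d : measure_display) (T : measurableType d)
             (P : probability T R) (eta : 'I_l -> T -> R),
        admissible_noise P Q2 eta /\
        v = ('E_P[fun w => ((dotv ell x - (dotv u (H *m x + rvec eta w) + c)) ^+ 2)%R])%E].

Definition minimax_err {R : realType} {m n p l : nat}
  (F : 'M[R]_(m, n)) (B : 'M[R]_(m, p)) (H : 'M[R]_(l, n))
  (Q1 : 'M[R]_p) (Q2 : 'M[R]_l) (ell : 'cV[R]_n) : \bar R :=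
  ereal_inf [set sigma_err F B H Q1 Q2 ell u c | u in setT & c in setT].

Definition scrF {R : realType} {m n l : nat}
  (F : 'M[R]_(m, n)) (H : 'M[R]_(l, n)) : set 'cV[R]_n :=
  [set F^T *m z + H^T *m u | z in setT & u in setT].

(* Main.v *)
Require Import Defs.
From HB Require Import structures.
From mathcomp Require Import all_boot all_order all_algebra.
From mathcomp Require Import all_classical all_reals all_analysis.
From mathcomp Require Import ring lra.
Import Order.TTheory GRing.Theory Num.Theory.
Local Open Scope ring_scope.

Section Dot.
Variable R : realType.

Lemma dotvE k (u v : 'cV[R]_k) : dotv u v = (u^T *m v) 0 0.
Proof. by rewrite /dotv !mxE; apply: eq_bigr => i _; rewrite !mxE. Qed.

Lemma dotvC k (u v : 'cV[R]_k) : dotv u v = dotv v u.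
Proof. by rewrite /dotv; apply: eq_bigr => i _; rewrite mulrC. Qed.

Lemma dotv_mul k j (A : 'M[R]_(k, j)) (u : 'cV[R]_j) (v : 'cV[R]_k) :
  dotv (A *m u) v = dotv u (A^T *m v).
Proof. by rewrite !dotvE trmx_mul mulmxA. Qed.

Lemma dotvDl k (u w v : 'cV[R]_k) : dotv (u + w) v = dotv u v + dotv w v.
Proof. by rewrite !dotvE linearD /= mulmxDl mxE. Qed.

Lemma dotvDr k (u w v : 'cV[R]_k) : dotv v (u + w) = dotv v u + dotv v w.
Proof. by rewrite !dotvE mulmxDr mxE. Qed.

Lemma dotvZl k a (u v : 'cV[R]_k) : dotv (a *: u) v = a * dotv u v.
Proof. by rewrite !dotvE linearZ /= -scalemxAl mxE. Qed.

Lemma dotvZr k a (u v : 'cV[R]_k) : dotv v (a *: u) = a * dotv v u.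
Proof. by rewrite !dotvE -scalemxAr mxE. Qed.

Lemma dotvNl k (u v : 'cV[R]_k) : dotv (- u) v = - dotv u v.
Proof. by rewrite -scaleN1r dotvZl mulN1r. Qed.

Lemma dotvNr k (u v : 'cV[R]_k) : dotv v (- u) = - dotv v u.
Proof. by rewrite -scaleN1r dotvZr mulN1r. Qed.

Lemma dotvBl k (u w v : 'cV[R]_k) : dotv (u - w) v = dotv u v - dotv w v.
Proof. by rewrite dotvDl dotvNl. Qed.

Lemma dotv0l k (v : 'cV[R]_k) : dotv 0 v = 0.
Proof. by rewrite /dotv big1 // => i _; rewrite mxE mul0r. Qed.

Lemma dotv0r k (v : 'cV[R]_k) : dotv v 0 = 0.
Proof. by rewrite dotvC dotv0l. Qed.

Lemma spd_ge0 k (Q : 'M[R]_k) (v : 'cV[R]_k) : spd Q -> 0 <= dotv (Q *m v) v.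
Proof.
move=> [_ hQ]; have [->|v0] := eqVneq v 0; first by rewrite mulmx0 dotv0l.
exact/ltW/hQ.
Qed.

Lemma spd_eq0 k (Q : 'M[R]_k) (v : 'cV[R]_k) : spd Q -> dotv (Q *m v) v = 0 -> v = 0.
Proof.
move=> [_ hQ] h; apply/eqP; apply/negPn/negP => /hQ; by rewrite h ltxx.
Qed.

Lemma spd_unit k (Q : 'M[R]_k) : spd Q -> Q \in unitmx.
Proof.
move=> hQ; rewrite unitmxE unitfE; apply/negP => /det0P [v v0 vQ].
have := @spd_eq0 k Q v^T hQ.
have [hT _] := hQ.
rewrite -{1}hT -trmx_mul vQ trmx0 dotv0l => /(_ erefl) /eqP.
by rewrite -trmx0 (inj_eq (@trmx_inj _ _ _)) (negbTE v0).
Qed.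

Lemma spd_inv k (Q : 'M[R]_k) (v : 'cV[R]_k) : spd Q -> Q *m (invmx Q *m v) = v.
Proof. by move=> /spd_unit hQ; rewrite mulmxA mulmxV // mul1mx. Qed.

Lemma spd_sym_inv k (Q : 'M[R]_k) : spd Q -> (invmx Q)^T = invmx Q.
Proof. by move=> [hT _]; rewrite trmx_inv hT. Qed.

Lemma spd_inv_form k (Q : 'M[R]_k) (v : 'cV[R]_k) : spd Q ->
  dotv (invmx Q *m v) v = dotv (Q *m (invmx Q *m v)) (invmx Q *m v).
Proof. by move=> hQ; rewrite spd_inv // dotvC. Qed.

Lemma spd_inv_ge0 k (Q : 'M[R]_k) (v : 'cV[R]_k) : spd Q -> 0 <= dotv (invmx Q *m v) v.
Proof. by move=> hQ; rewrite spd_inv_form //; exact: spd_ge0. Qed.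

Lemma spd_CS k (Q : 'M[R]_k) (v f : 'cV[R]_k) : spd Q ->
  (dotv v f) ^+ 2 <= dotv (invmx Q *m v) v * dotv (Q *m f) f.
Proof.
move=> hQ; set w := invmx Q *m v.
have vE : v = Q *m w by rewrite /w spd_inv.
have [hT _] := hQ.
have sym x y : dotv (Q *m x) y = dotv (Q *m y) x.
  by rewrite dotv_mul hT dotvC.
rewrite spd_inv_form // -/w vE.
have [w0|wn0] := eqVneq w 0.
  by rewrite w0 mulmx0 !dotv0l expr0n /= mul0r.
set a := dotv (Q *m w) w; set b := dotv (Q *m w) f; set c := dotv (Q *m f) f.
have ha : 0 < a by case: hQ => _ /(_ _ wn0).
have key t : 0 <= c - 2 * t * b + t ^+ 2 * a.
  have := @spd_ge0 k Q (f - t *: w) hQ.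
  rewrite mulmxBr -scalemxAr !dotvBl !dotvZl.
  rewrite ![dotv _ (f - _)]dotvC !dotvBl !dotvZl.
  rewrite ![dotv f _]dotvC ![dotv w _]dotvC (sym f w) -/a -/b -/c.
  by move=> h; apply: le_trans h _; rewrite le_eqVlt; apply/orP; left; apply/eqP; ring.
have := key (b / a).
have -> : c - 2 * (b / a) * b + (b / a) ^+ 2 * a = (a * c - b ^+ 2) / a.
  by field; rewrite gt_eqF.
move=> h; have := mulr_ge0 h (ltW ha).
by rewrite divfK ?gt_eqF // subr_ge0.
Qed.

End Dot.
Arguments spd_ge0 {R k Q} v.
Arguments spd_eq0 {R k Q v}.
Arguments spd_unit {R k Q}.
Arguments spd_inv {R k Q} v.
Arguments spd_sym_inv {R k Q}.
Arguments spd_inv_form {R k Q} v.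
Arguments spd_inv_ge0 {R k Q} v.
Arguments spd_CS {R k Q} v f.
Section Range.
Variable R : realType.

Lemma range_lemma k j (M : 'M[R]_(k, j)) (b : 'cV[R]_j) :
  (forall x, M *m x = 0 -> dotv b x = 0) -> exists w : 'cV[R]_k, b = M^T *m w.
Proof.
move=> h.
have sub : (b^T <= M)%MS.
  rewrite submxE; apply/eqP/matrixP => i jj; rewrite [i]ord1 [RHS]mxE.
  have := h (cokermx M *m delta_mx jj 0).
  rewrite mulmxA mulmx_coker mul0mx => /(_ erefl).
  rewrite dotvE mulmxA -colE mxE => ->. by [].
have [D hD] := submxP sub.
exists D^T; by rewrite -trmx_mul -hD trmxK.
Qed.

Lemma not_range_lemma k j (M : 'M[R]_(k, j)) (b : 'cV[R]_j) :
  ~ (exists w : 'cV[R]_k, b = M^T *m w) -> exists x, M *m x = 0 /\ dotv b x != 0.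
Proof.
move=> nh; apply: contrapT => nx; apply: nh; apply: range_lemma => x Mx.
apply/eqP/negPn/negP => bx; apply: nx; by exists x.
Qed.

End Range.
Section Exist.
Variable R : realType.

Lemma dotv_col a b (x y : 'cV[R]_a) (u v : 'cV[R]_b) :
  dotv (col_mx x u) (col_mx y v) = dotv x y + dotv u v.
Proof. by rewrite !dotvE tr_col_mx mul_row_col mxE. Qed.

Lemma scrF_orth m n l (F : 'M[R]_(m, n)) (H : 'M[R]_(l, n)) ell (x : 'cV[R]_n) :
  scrF F H ell -> F *m x = 0 -> H *m x = 0 -> dotv ell x = 0.
Proof.
move=> [z _ [u _ <-]] Fx Hx.
by rewrite dotvDl !dotv_mul !trmxK Fx Hx !dotv0r addr0.
Qed.

Lemma exists_sol m n p l (F : 'M[R]_(m, n)) (B : 'M[R]_(m, p)) (H : 'M[R]_(l, n))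
  (Q1 : 'M[R]_p) (Q2 : 'M[R]_l) (ell : 'cV[R]_n) :
  spd Q1 -> spd Q2 -> scrF F H ell ->
  exists (pv : 'cV[R]_n) (zh : 'cV[R]_m),
        F *m pv = B *m invmx Q1 *m B^T *m zh /\
        F^T *m zh = ell - H^T *m (Q2 *m (H *m pv)).
Proof.
move=> h1 h2 hF.
set G := B *m invmx Q1 *m B^T.
set S := block_mx (H^T *m Q2 *m H) F^T F (- G).
have GT : G^T = G.
  by rewrite /G !trmx_mul trmxK spd_sym_inv // mulmxA.
have ST : S^T = S.
  rewrite /S tr_block_mx trmxK linearN /= GT !trmx_mul trmxK.
  by case: h2 => -> _; rewrite mulmxA.
have Gz z : dotv (G *m z) z = dotv (invmx Q1 *m (B^T *m z)) (B^T *m z).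
  by rewrite /G -!mulmxA dotv_mul.
have [w hw] : exists w : 'cV[R]_(n + m), col_mx ell 0 = S^T *m w.
  apply: range_lemma => x; rewrite -(vsubmxK x).
  set pp := usubmx x; set z := dsubmx x.
  rewrite /S mul_block_col -(@col_mx0 R n m 1).
  move/eq_col_mx => [e1 e2].
  rewrite dotv_col dotv0l addr0.
  have e3 : F *m pp = G *m z by apply/eqP; rewrite -subr_eq0 -mulNmx; apply/eqP.
  have := congr1 (dotv pp) e1; rewrite dotv0r dotvDr.
  rewrite -!mulmxA [dotv pp (H^T *m _)]dotvC [dotv pp (F^T *m z)]dotvC.
  rewrite [dotv (H^T *m _) _]dotv_mul [dotv (F^T *m _) _]dotv_mul !trmxK e3.
  rewrite [dotv z _]dotvC Gz.
  move=> hs.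
  have a0 := spd_inv_ge0 (B^T *m z) h1.
  have c0 := spd_ge0 (H *m pp) h2.
  have hc : dotv (Q2 *m (H *m pp)) (H *m pp) = 0.
    apply/eqP; rewrite eq_le c0 andbT; rewrite -hs lerDl //.
  have ha : dotv (invmx Q1 *m (B^T *m z)) (B^T *m z) = 0.
    by move: hs; rewrite hc add0r.
  have Hp := spd_eq0 h2 hc.
  move: ha; rewrite spd_inv_form // => /(spd_eq0 h1) w0.
  have Fp : F *m pp = 0 by rewrite e3 /G -!mulmxA w0 mulmx0.
  exact: scrF_orth hF Fp Hp.
move: hw; rewrite ST -(vsubmxK w) /S mul_block_col => /eq_col_mx [e1 e2].
exists (usubmx w), (dsubmx w); split.
  by apply/eqP; rewrite -subr_eq0 -mulNmx e2.
by rewrite e1 -!mulmxA addrAC subrr add0r.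
Qed.

End Exist.
Section Meas.
Local Open Scope ereal_scope.
Context d (T : measurableType d) (R : realType) (P : probability T R).

Lemma L1_add (f g : T -> R) : f \in Lfun P 1 -> g \in Lfun P 1 ->
  (fun w => f w + g w)%R \in Lfun P 1.
Proof. by move=> hf hg; exact: (rpredD hf hg). Qed.

Lemma L1_scale (a : R) (f : T -> R) : f \in Lfun P 1 ->
  (fun w => a * f w)%R \in Lfun P 1.
Proof.
move=> hf; have -> : (fun w => a * f w)%R = a \o* f by apply/funext => w /=; rewrite mulrC.
exact: (@Lfun_scale _ _ _ P f a 1%R (lexx _) hf).
Qed.

Lemma L1_cst (c : R) : (fun _ : T => c) \in Lfun P 1.
Proof. exact: (@Lfun_cst _ _ _ P c 1%R). Qed.

Lemma L1_meas (f : T -> R) : f \in Lfun P 1 -> measurable_fun setT f.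
Proof. by move=> /sub_Lfun_mfun; rewrite inE. Qed.

Lemma L2_L1 (f : T -> R) : f \in Lfun P 2%:E -> f \in Lfun P 1.
Proof. by apply: Lfun_subset12; apply: fin_num_measure. Qed.

Lemma L2_mul (f g : T -> R) : f \in Lfun P 2%:E -> g \in Lfun P 2%:E ->
  (fun w => f w * g w)%R \in Lfun P 1.
Proof. exact: Lfun2_mul_Lfun1. Qed.

Lemma E_scale (a : R) (f : T -> R) : f \in Lfun P 1 ->
  fine 'E_P[fun w => a * f w]%R = (a * fine 'E_P[f])%R.
Proof.
move=> hf; have -> : (fun w => a * f w)%R = a \o* f by apply/funext => w /=; rewrite mulrC.
by rewrite (expectationZl _ hf) fineM // expectation_fin_num.
Qed.

Lemma E_sum k (X : 'I_k -> T -> R) : (forall i, X i \in Lfun P 1) ->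
  (fun w => \sum_(i < k) X i w)%R \in Lfun P 1 /\
  'E_P[fun w => \sum_(i < k) X i w]%R = (\sum_(i < k) fine 'E_P[X i])%:E.
Proof.
elim: k X => [|k IH] X hX.
  have -> : (fun w => \sum_(i < 0) X i w)%R = (fun _ => 0%R).
    by apply/funext => w; rewrite big_ord0.
  by rewrite big_ord0; split; [exact: L1_cst | exact: expectation_cst].
have -> : (fun w => \sum_(i < k.+1) X i w)%R =
    (fun w => (fun w => \sum_(i < k) X (widen_ord (leqnSn k) i) w) w + X ord_max w)%R.
  by apply/funext => w; rewrite big_ord_recr.
have [h1 h2] := IH (fun i => X (widen_ord (leqnSn k) i)) (fun i => hX _).
split; first exact: L1_add.
rewrite (expectationD h1 (hX _)) h2 big_ord_recr /= EFinD.
by rewrite fineK // expectation_fin_num.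
Qed.

End Meas.
Arguments L1_add {d T R P f g}.
Arguments L1_scale {d T R P} a {f}.
Arguments L1_cst {d T R P}.
Arguments L1_meas {d T R P f}.
Arguments L2_L1 {d T R P f}.
Arguments L2_mul {d T R P f g}.
Arguments E_scale {d T R P} a {f}.
Arguments E_sum {d T R P k}.
Section Noise.
Local Open Scope ereal_scope.
Context d (T : measurableType d) (R : realType) (P : probability T R).

Lemma noise_bound l (Q2 : 'M[R]_l) (eta : 'I_l -> T -> R) (u : 'cV[R]_l) (t : R) :
  spd Q2 -> admissible_noise P Q2 eta ->
  'E_P[fun w => (t - dotv u (rvec eta w)) ^+ 2]%R <=
    (t ^+ 2 + dotv (invmx Q2 *m u) u)%:E.
Proof.
move=> hQ [hL2 [hE htr]].
set K := dotv (invmx Q2 *m u) u.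
have K0 : (0 <= K)%R by exact: spd_inv_ge0.
have hK : dotv (invmx Q2 *m u) u = K by [].
clearbody K.
have hL1 i : eta i \in Lfun P 1 by exact: L2_L1.
have [Ls _] := E_sum (fun i w => u i 0%R * eta i w)%R (fun i => L1_scale _ (hL1 i)).
set s := (fun w => \sum_(i < l) (fun i w => u i 0%R * eta i w) i w)%R in Ls.
have sE w : dotv u (rvec eta w) = s w.
  by rewrite /dotv /s; apply: eq_bigr => i _; rewrite mxE.
have [L1s E1s] := E_sum (fun i w => (- (2 * t * u i 0)) * eta i w)%R
  (fun i => L1_scale _ (hL1 i)).
set s1 := (fun w => \sum_(i < l) (fun i w => (- (2 * t * u i 0)) * eta i w) i w)%R in L1s E1s.
have E1 : 'E_P[s1] = 0%:E.
  rewrite E1s; congr EFin; apply: big1 => i _.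
  by rewrite E_scale // hE mulr0.
pose X2 (i : 'I_l) := (fun w => \sum_(j < l)
   (fun j w => (K * Q2 i j) * (eta i w * eta j w)) j w)%R.
have hX2 i : X2 i \in Lfun P 1 /\
    'E_P[X2 i] = (\sum_(j < l) (K * Q2 i j) * corr_mx P eta i j)%:E.
  have [h1 h2] := E_sum (fun j w => (K * Q2 i j) * (eta i w * eta j w))%R
    (fun j => L1_scale _ (L2_mul (hL2 i) (hL2 j))).
  split => //; rewrite h2; congr EFin; apply: eq_bigr => j _.
  by rewrite E_scale ?L2_mul // mxE.
have [L2s E2s] := E_sum X2 (fun i => (hX2 i).1).
set s2 := (fun w => \sum_(i < l) X2 i w)%R in L2s E2s.
have E2 : 'E_P[s2] = (K * \tr (Q2 *m corr_mx P eta))%:E.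
  rewrite E2s; congr EFin.
  rewrite /mxtrace mulr_sumr; apply: eq_bigr => i _.
  rewrite (hX2 i).2 /= mxE mulr_sumr; apply: eq_bigr => j _.
  rewrite -mulrA; congr (_ * (_ * _))%R.
  rewrite !mxE; congr (fine _); congr expectation.
  by apply/funext => w /=; rewrite mulrC.
pose g := (fun w => (t ^+ 2 + s1 w) + s2 w)%R.
have Lg : g \in Lfun P 1 by apply: L1_add => //; apply: L1_add => //; exact: L1_cst.
have Eg : 'E_P[g] = (t ^+ 2 + K * \tr (Q2 *m corr_mx P eta))%:E.
  rewrite /g (expectationD _ L2s); last by apply: L1_add => //; exact: L1_cst.
  rewrite (expectationD (L1_cst _) L1s) E1 E2 expectation_cst.
  by rewrite adde0 EFinD.
have pw w : ((t - s w) ^+ 2 <= g w)%R.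
  have s1E : s1 w = (- (2 * t) * s w)%R.
    rewrite /s1 /s mulr_sumr; apply: eq_bigr => i _ /=; ring.
  have s2E : s2 w = (K * dotv (Q2 *m rvec eta w) (rvec eta w))%R.
    rewrite /s2 /X2 /dotv mulr_sumr; apply: eq_bigr => i _.
    rewrite /rvec !mxE big_distrl mulr_sumr; apply: eq_bigr => j _.
    by rewrite !mxE /=; ring.
  have := spd_CS u (rvec eta w) hQ; rewrite hK sE => cs.
  rewrite /g s1E s2E.
  have -> : ((t - s w) ^+ 2 = t ^+ 2 + - (2 * t) * s w + s w ^+ 2)%R by ring.
  by rewrite lerD2l.
have -> : (fun w => (t - dotv u (rvec eta w)) ^+ 2)%R = (fun w => (t - s w) ^+ 2)%R.
  by apply/funext => w; rewrite sE.
apply: (le_trans (y := 'E_P[g])).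
  apply: expectation_le.
  - exact: (measurable_realfun.measurable_funX 2 (measurable_realfun.measurable_funB (measurable_cst t) (L1_meas Ls))).
  - exact: (L1_meas Lg).
  - by move=> w; exact: sqr_ge0.
  - by move=> w; exact: (le_trans (sqr_ge0 _) (pw w)).
  - exact: aeW.
rewrite Eg lee_fin lerD2l.
by rewrite -{2}(mulr1 K) ler_wpM2l.
Qed.

End Noise.
Section BoolNoise.
Local Open Scope ereal_scope.
Variable R : realType.

Definition Pb : probability bool R := bernoulli_prob (2^-1 : R).

Definition xi (b : bool) : R := if b then 1%R else (-1)%R.

Lemma half01 : (0 <= (2^-1 : R) <= 1)%R.
Proof. by rewrite invr_ge0 ler0n /= invf_le1 // ler1n. Qed.

Lemma bool_meas (f : bool -> R) : measurable_fun setT f.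
Proof. by move=> _ Y mY; rewrite setTI. Qed.

Lemma bool_L2 (f : bool -> R) : `|f true|%R = `|f false|%R -> f \in Lfun Pb 2%:E.
Proof.
move=> hf; rewrite inE; apply/andP; split; first by rewrite inE /=; exact: bool_meas.
rewrite inE /= /finite_norm -Lnorm_abse.
have -> : abse \o (EFin \o f) = abse \o (EFin \o cst `|f true|%R).
  by apply/funext => -[] /=; rewrite ?hf normr_id.
rewrite Lnorm_abse.
have := @Lfun_cst _ _ R Pb `|f true|%R 2.
by rewrite inE => /andP[_]; rewrite inE.
Qed.

Lemma bool_L2g (f : bool -> R) : f \in Lfun Pb 2%:E.
Proof.
set a := ((f true + f false) / 2)%R; set c := ((f true - f false) / 2)%R.
have -> : f = (fun b => a + xi b * c)%R.
  by apply/funext => -[] /=; rewrite /a /c; field.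
have h1 : (fun _ => a) \in Lfun Pb 2%:E by apply: bool_L2.
have h2 : (fun b => xi b * c)%R \in Lfun Pb 2%:E.
  by apply: bool_L2 => /=; rewrite mul1r mulN1r normrN.
by have := rpredD h1 h2; move=> /(_ (lee1n 2)).
Qed.

Lemma E_bool_ge0 (f : bool -> R) : (forall b, 0 <= f b)%R ->
  'E_Pb[f] = (2^-1 * f true + 2^-1 * f false)%:E.
Proof.
move=> f0; rewrite unlock /Pb integral_bernoulli_prob; last by move=> b; rewrite lee_fin.
  by rewrite -!EFinM -EFinD; congr EFin; rewrite /unstable.onem; field.
exact: (half01).
Qed.

Lemma E_xi : 'E_Pb[xi] = 0.
Proof.
have -> : xi = ((fun b => xi b + 1) \- cst 1)%R.
  by apply/funext => b /=; rewrite addrK.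
rewrite expectationB; [|by apply: L2_L1; apply: bool_L2g|by apply: L2_L1; apply: bool_L2g].
rewrite expectation_cst E_bool_ge0; last by case => /=; rewrite ?addNr // ler0n.
by rewrite /= addNr mulr0 addr0 -EFinB; congr EFin; field.
Qed.

Lemma E_bool_err (t k : R) :
  'E_Pb[fun b => (t - xi b * k) ^+ 2]%R = (t ^+ 2 + k ^+ 2)%:E.
Proof.
rewrite E_bool_ge0; last by move=> b; exact: sqr_ge0.
by congr EFin; rewrite /=; field.
Qed.

End BoolNoise.
Arguments Pb {R}.
Arguments xi {R}.
Arguments E_xi {R}.
Arguments bool_L2g {R}.
Arguments bool_L2 {R}.
Arguments E_bool_err {R}.
Arguments E_bool_ge0 {R}.
Section BNoise.
Local Open Scope ereal_scope.
Variable R : realType.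

Definition bnoise {l} (w : 'cV[R]_l) : 'I_l -> bool -> R := fun i b => (xi b * w i 0)%R.

Lemma bnoise_rvec l (w : 'cV[R]_l) b : rvec (@bnoise l w) b = xi b *: w.
Proof. by apply/matrixP => i j; rewrite !mxE [j]ord1. Qed.

Lemma bnoise_adm l (Q2 : 'M[R]_l) (w : 'cV[R]_l) :
  (dotv (Q2 *m w) w <= 1)%R -> admissible_noise Pb Q2 (bnoise w).
Proof.
move=> hw; split; first by move=> i; exact: bool_L2g.
split.
  move=> i; have -> : bnoise w i = ((w i 0) \o* xi)%R by [].
  by rewrite expectationZl ?E_xi ?mule0 //; apply: L2_L1; exact: bool_L2g.
have -> : corr_mx Pb (bnoise w) = \matrix_(i, j) (w i 0 * w j 0)%R.
  apply/matrixP => i j; rewrite !mxE.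
  have -> : (bnoise w i \* bnoise w j)%R = cst (w i 0 * w j 0)%R.
    by apply/funext => -[] /=; rewrite /bnoise /=; ring.
  by rewrite expectation_cst.
apply: le_trans hw; rewrite le_eqVlt; apply/orP; left; apply/eqP.
rewrite /mxtrace /dotv; apply: eq_bigr => i _; rewrite !mxE big_distrl /=.
by apply: eq_bigr => j _; rewrite !mxE /=; ring.
Qed.

End BNoise.
Arguments bnoise {R l}.
Arguments bnoise_adm {R l Q2 w}.
Arguments bnoise_rvec {R l}.

Section SigmaLB.
Local Open Scope ereal_scope.
Variables (R : realType) (m n p l : nat)
  (F : 'M[R]_(m, n)) (B : 'M[R]_(m, p)) (H : 'M[R]_(l, n))
  (Q1 : 'M[R]_p) (Q2 : 'M[R]_l) (ell : 'cV[R]_n).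

Lemma sigma_lb0 u c x f w : F *m x = B *m f -> (dotv (Q1 *m f) f <= 1)%R ->
  (dotv (Q2 *m w) w <= 1)%R ->
  (((dotv ell x - dotv u (H *m x) - c) ^+ 2 + (dotv u w) ^+ 2)%R%:E <=
   sigma_err F B H Q1 Q2 ell u c).
Proof.
move=> hx hf hw; apply: ereal_sup_ubound.
exists x, f; split => //; split => //.
exists default_measure_display, bool, Pb, (bnoise w); split; first exact: bnoise_adm.
rewrite -E_bool_err; congr expectation; apply/funext => b.
by rewrite bnoise_rvec dotvDr dotvZr; congr (_ ^+ 2)%R; ring.
Qed.

Lemma sigma_lb u c x f w : F *m x = B *m f -> (dotv (Q1 *m f) f <= 1)%R ->
  (dotv (Q2 *m w) w <= 1)%R ->
  (((dotv ell x - dotv u (H *m x)) ^+ 2 + (dotv u w) ^+ 2)%R%:E <=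
   sigma_err F B H Q1 Q2 ell u c).
Proof.
move=> hx hf hw.
have h1 := @sigma_lb0 u c _ _ _ hx hf hw.
have hx' : F *m (- x) = B *m (- f) by rewrite !mulmxN hx.
have hf' : (dotv (Q1 *m (- f)) (- f) <= 1)%R.
  by rewrite mulmxN dotvNl [dotv _ (- f)]dotvC dotvNl opprK dotvC.
have h2 := @sigma_lb0 u c _ _ _ hx' hf' hw.
set A := (dotv ell x - dotv u (H *m x))%R.
have [hc|hc] := leP (A * c)%R 0%R.
  apply: le_trans h1; rewrite lee_fin lerD2r.
  rewrite -/A; have -> : ((A - c) ^+ 2 = A ^+ 2 + (c ^+ 2 - 2 * (A * c)))%R by ring.
  rewrite lerDl; apply: addr_ge0; first exact: sqr_ge0.
  by rewrite oppr_ge0 pmulr_rle0.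
apply: le_trans h2; rewrite lee_fin lerD2r.
have -> : (dotv ell (- x) - dotv u (H *m - x) - c = - (A + c))%R.
  by rewrite mulmxN !dotvNr /A; ring.
rewrite sqrrN; have -> : ((A + c) ^+ 2 = A ^+ 2 + (c ^+ 2 + 2 * (A * c)))%R by ring.
rewrite lerDl; apply: addr_ge0; first exact: sqr_ge0.
by rewrite mulr_ge0 // ltW.
Qed.

End SigmaLB.
Section KeyReal.
Variable R : realType.

Lemma sqrt_inv2 (D : R) : 0 < D -> ((Num.sqrt D)^-1) ^+ 2 = D^-1.
Proof. by move=> D0; rewrite exprVn sqr_sqrtr // ltW. Qed.

Lemma key_real (A C X Y : R) (S : \bar R) : 0 <= A -> 0 <= C -> X + Y = A + C ->
  (forall a b : R, a ^+ 2 * A <= 1 -> b ^+ 2 * C <= 1 ->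
     (((a * X) ^+ 2 + (b * Y) ^+ 2)%:E <= S)%E) -> ((A + C)%:E <= S)%E.
Proof.
move=> A0 C0 hXY hS.
case: S hS => [s| |] hS; last 2 first.
- by rewrite leey.
- have := hS 0 0; rewrite !expr0n /= !mul0r ler01 => /(_ isT isT).
  by rewrite leeNy_eq.
rewrite lee_fin.
have hs a b : a ^+ 2 * A <= 1 -> b ^+ 2 * C <= 1 -> (a * X) ^+ 2 + (b * Y) ^+ 2 <= s.
  by move=> ha hb; have := hS a b ha hb; rewrite lee_fin.
have s0 : 0 <= s.
  by apply: le_trans (hs 0 0 _ _); rewrite ?expr0n /= ?mul0r ?ler01.
have [Apos|A00] := ltP 0 A; last have A00' : A = 0 by apply/le_anti; rewrite A00 A0.
- have [Cpos|C00] := ltP 0 C; last have C00' : C = 0 by apply/le_anti; rewrite C00 C0.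
  + have := hs (Num.sqrt A)^-1 (Num.sqrt C)^-1.
    rewrite !exprMn !sqrt_inv2 // !mulVf ?gt_eqF // lexx => /(_ isT isT).
    apply: le_trans.
    set d := X - A.
    have -> : X = A + d by rewrite /d addrC subrK.
    have -> : Y = C - d by rewrite /d; lra.
    have -> : A^-1 * (A + d) ^+ 2 + C^-1 * (C - d) ^+ 2 = A + C + (d ^+ 2 / A + d ^+ 2 / C).
      by field; rewrite !gt_eqF.
    by rewrite lerDl; apply: addr_ge0; apply: divr_ge0 => //; exact: sqr_ge0.
  + rewrite C00' addr0.
    have [Y0|Yn0] := eqVneq Y 0.
      have XA : X = A by move: hXY; rewrite Y0 C00' !addr0.
      have := hs (Num.sqrt A)^-1 0.
      rewrite !exprMn sqrt_inv2 // mulVf ?gt_eqF // lexx C00' mulr0 ler01.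
      move=> /(_ isT isT); apply: le_trans.
      by rewrite XA expr0n /= mul0r addr0 expr2 mulKf ?gt_eqF.
    have := hs 0 ((A + 1) / Y).
    rewrite C00' mulr0 ler01 expr0n /= mul0r ler01 => /(_ isT isT).
    apply: le_trans; rewrite mul0r expr0n /= add0r divfK //.
    rewrite sqrrD expr1n; nra.
- rewrite A00' add0r.
  have [X0|Xn0] := eqVneq X 0.
    have YC : Y = C by move: hXY; rewrite X0 A00' !add0r.
    have [Cpos|C00] := ltP 0 C; last first.
      have -> : C = 0 by apply/le_anti; rewrite C00 C0.
      exact: s0.
    have := hs 0 (Num.sqrt C)^-1.
    rewrite !exprMn sqrt_inv2 // mulVf ?gt_eqF // lexx A00' mulr0 ler01.
    move=> /(_ isT isT); apply: le_trans.
    by rewrite YC expr0n /= mul0r add0r expr2 mulKf ?gt_eqF.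
  have := hs ((C + 1) / X) 0.
  rewrite A00' mulr0 ler01 expr0n /= mul0r ler01 => /(_ isT isT).
  apply: le_trans; rewrite mul0r expr0n /= addr0 divfK //.
  rewrite sqrrD expr1n; nra.
Qed.

End KeyReal.
Arguments key_real {R A C X Y S}.
Lemma ereal_pinfty_of {R : realType} (e : \bar R) :
  (forall M : R, (M%:E <= e)%E) -> e = +oo%E.
Proof.
case: e => [s| |] h //.
  by exfalso; move: (h (s + 1)); rewrite lee_fin => hh; lra.
by have := h 0; rewrite leeNy_eq.
Qed.

Theorem mainTheorem1 (R : realType) (m n p l : nat)
  (F : 'M[R]_(m, n)) (B : 'M[R]_(m, p)) (H : 'M[R]_(l, n))
  (Q1 : 'M[R]_p) (Q2 : 'M[R]_l) (ell : 'cV[R]_n) :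
  spd Q1 -> spd Q2 ->
  (scrF F H ell ->
     (exists (pv : 'cV[R]_n) (zh : 'cV[R]_m),
        F *m pv = B *m invmx Q1 *m B^T *m zh /\
        F^T *m zh = ell - H^T *m (Q2 *m (H *m pv))) /\
     (forall (pv : 'cV[R]_n) (zh : 'cV[R]_m),
        F *m pv = B *m invmx Q1 *m B^T *m zh ->
        F^T *m zh = ell - H^T *m (Q2 *m (H *m pv)) ->
        sigma_err F B H Q1 Q2 ell (Q2 *m (H *m pv)) 0 = minimax_err F B H Q1 Q2 ell /\
        minimax_err F B H Q1 Q2 ell = (dotv ell pv)%:E)) /\
  (~ scrF F H ell -> minimax_err F B H Q1 Q2 ell = +oo%E).
Proof.
move=> h1 h2; split.
  move=> hF; split; first exact: exists_sol.
  move=> pv zh e1 e2.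
  set g := invmx Q1 *m (B^T *m zh).
  set A := dotv g (B^T *m zh).
  set C := dotv (Q2 *m (H *m pv)) (H *m pv).
  have A0 : 0 <= A by exact: spd_inv_ge0.
  have C0 : 0 <= C by exact: spd_ge0.
  have Fp : F *m pv = B *m g by rewrite e1 /g -!mulmxA.
  have ellE : ell = F^T *m zh + H^T *m (Q2 *m (H *m pv)).
    by rewrite e2 subrK.
  have hlp : dotv ell pv = A + C.
    rewrite {1}ellE dotvDl [dotv (F^T *m _) _]dotv_mul [dotv (H^T *m _) _]dotv_mul.
    by rewrite !trmxK Fp [dotv zh _]dotvC [dotv (B *m g) _]dotv_mul.
  have LB u c : ((dotv ell pv)%:E <= sigma_err F B H Q1 Q2 ell u c)%E.
    rewrite hlp; apply: (@key_real _ A C (dotv ell pv - dotv u (H *m pv))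
        (dotv u (H *m pv))) => //.
      by rewrite hlp subrK.
    move=> a b ha hb.
    have hx : F *m (a *: pv) = B *m (a *: g) by rewrite -!scalemxAr Fp.
    have hf : dotv (Q1 *m (a *: g)) (a *: g) <= 1.
      rewrite -scalemxAr dotvZl dotvZr mulrA -expr2.
      by rewrite /A spd_inv_form // in ha.
    have hw : dotv (Q2 *m (b *: (H *m pv))) (b *: (H *m pv)) <= 1.
      by rewrite -scalemxAr dotvZl dotvZr mulrA -expr2.
    have := @sigma_lb _ _ _ _ _ F B H Q1 Q2 ell u c _ _ _ hx hf hw.
    by rewrite -scalemxAr !dotvZr -mulrBr.
  have UB : (sigma_err F B H Q1 Q2 ell (Q2 *m (H *m pv)) 0 <= (dotv ell pv)%:E)%E.
    apply: ge_ereal_sup => v [x [f [hx [hf [d [T [P [eta [hadm ->]]]]]]]]].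
    set u := Q2 *m (H *m pv).
    set t := dotv ell x - dotv u (H *m x).
    have -> : (fun w => (dotv ell x - (dotv u (H *m x + rvec eta w) + 0)) ^+ 2)
        = (fun w => (t - dotv u (rvec eta w)) ^+ 2).
      by apply/funext => w; rewrite addr0 dotvDr opprD addrA.
    apply: le_trans (@noise_bound _ _ _ P _ Q2 eta u t h2 hadm) _.
    rewrite lee_fin hlp.
    have -> : invmx Q2 *m u = H *m pv.
      by rewrite /u !mulmxA mulVmx ?spd_unit // mul1mx.
    rewrite [dotv (H *m pv) u]dotvC -/C.
    rewrite lerD2r.
    have tE : t = dotv (B^T *m zh) f.
      rewrite /t [dotv u _]dotvC [dotv (H *m x) _]dotv_mul [dotv x _]dotvC -dotvBl.
      rewrite /u -e2 [dotv (F^T *m zh) _]dotv_mul trmxK hx dotvC [dotv (B *m f) _]dotv_mul.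
      by rewrite dotvC.
    rewrite tE; apply: le_trans (spd_CS (B^T *m zh) f h1) _.
    by rewrite -/g -/A -{2}(mulr1 A) ler_wpM2l.
  have eqS : sigma_err F B H Q1 Q2 ell (Q2 *m (H *m pv)) 0 = (dotv ell pv)%:E.
    by apply/le_anti; rewrite UB LB.
  have eqM : minimax_err F B H Q1 Q2 ell = (dotv ell pv)%:E.
    apply/le_anti; apply/andP; split.
      apply: ge_ereal_inf; exists (sigma_err F B H Q1 Q2 ell (Q2 *m (H *m pv)) 0).
        by exists (Q2 *m (H *m pv)) => //; exists 0.
      by rewrite eqS.
    apply: le_ereal_inf_tmp => _ [u _ [c _ <-]]; exact: LB.
  by rewrite eqS eqM.
move=> nF; apply/ereal_inf_pinfty => _ [u _ [c _ <-]]; rewrite /=.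
have [x [Mx hx]] : exists x, col_mx F H *m x = 0 /\ dotv ell x != 0.
  apply: not_range_lemma => -[w hw]; apply: nF.
  move: hw; rewrite -(vsubmxK w) tr_col_mx mul_row_col => ->.
  by exists (usubmx w) => //; exists (dsubmx w).
move: Mx; rewrite mul_col_mx -(@col_mx0 R m l 1) => /eq_col_mx [Fx Hx].
apply: ereal_pinfty_of => M.
set L := dotv ell x.
set a := (`|M| + `|c| + 1) / L.
have hx' : F *m (a *: x) = B *m 0 by rewrite -scalemxAr Fx scaler0 mulmx0.
have hf : dotv (Q1 *m 0) 0 <= 1 by rewrite mulmx0 dotv0l ler01.
have hw : dotv (Q2 *m 0) 0 <= 1 by rewrite mulmx0 dotv0l ler01.
apply: le_trans (@sigma_lb0 _ _ _ _ _ F B H Q1 Q2 ell u c _ _ _ hx' hf hw).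
rewrite lee_fin -scalemxAr Hx scaler0 !dotv0r subr0 dotvZr /a divfK //.
rewrite expr0n /= addr0.
have K1 : `|M| + 1 <= `|M| + `|c| + 1 - c.
  by have := ler_norm c; lra.
have hM : M <= `|M| by exact: ler_norm.
have hM0 : 0 <= `|M| by [].
nra.
Qed.
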